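(* Let $\Phi$ be a join doctrine. (a) For every $\Phi$-suplattice $X$ with least element $\bot$, $\bot$ is $\Phi$-compact iff the empty poset is not in $\Phi$; in particular this applies to $0\in\mathbb{I}$. (b) If $\omega\in\Phi$, then no $r>0$ is $\Phi$-compact in $\mathbb{I}$. If $\omega\notin\Phi$, then: (i) for every $\phi\in\Phi$ and every sequence $x_0,x_1,\dots\in\phi$ there are indices $i_0<i_1<\cdots$ such that $\{x_{i_0},x_{i_1},\dots\}$ has an upper bound in $\phi$; in particular every increasing sequence $x_0\le x_1\le\cdots$ in $\phi$ has an upper bound in $\phi$; (ii) every $\Phi$-continuous $\Phi$-suplattice $X$ which also has joins of countable increasing sequences is $\Phi$-algebraic, and the join of any sequence $x_0\ll x_1\ll\cdots$ in $X$ is $\Phi$-compact; in particular every $r>0$ is $\Phi$-compact in $\mathbb{I}$.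
   Context: A join doctrine is a class $\Phi$ of posets such that: (1) the one-element poset is in $\Phi$; (2) if a poset $P$ is the union of a set $\mathcal{S}$ of subposets each in $\Phi$ and $\mathcal{S}$ (ordered by inclusion) is in $\Phi$, then $P\in\Phi$; (3) if $f:P\to Q$ is monotone with cofinal image and $P\in\Phi$ then $Q\in\Phi$; (4) cofinal subposets of members of $\Phi$ are in $\Phi$. For a poset $X$, $\Phi(X)$ is the set of lower subsets of $X$ which, as subposets, belong to $\Phi$. A $\Phi$-join is a join of a subset belonging to $\Phi$; a $\Phi$-suplattice is a poset with all $\Phi$-joins. $\Downarrow x:=\bigcap\{\phi\in\Phi(X)\mid x\le\bigvee\phi\}$; $y\ll x$ iff $y\in\Downarrow x$; $x$ is $\Phi$-compact if $x\ll x$. $X$ is $\Phi$-continuous if for each $x$ there is $\phi\in\Phi(X)$ with $\phi\subseteq\Downarrow x$ and $x\le\bigvee\phi$; $\Phi$-algebraic if the smallest subset containing the $\Phi$-compact elements and closed under $\Phi$-joins is $X$. $\mathbb{I}=[0,1]$ with usual order; $\omega$ = natural numbers with usual order. *)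

(* Defs.v *)
From Stdlib Require Import Reals Lra ProofIrrelevance FunctionalExtensionality PropExtensionality.
Open Scope R_scope.

Record poset := Poset {
  car :> Type;
  le : car -> car -> Prop;
  le_refl : forall x, le x x;
  le_trans : forall x y z, le x y -> le y z -> le x z;
  le_antisym : forall x y, le x y -> le y x -> x = y
}.
Arguments le {p} _ _.

Definition sub (P : poset) (A : P -> Prop) : poset.
Proof.
  refine (@Poset {x : P | A x} (fun a b => le (proj1_sig a) (proj1_sig b)) _ _ _).
  - intros [x hx]; apply le_refl.
  - intros [x hx] [y hy] [z hz]; simpl; apply le_trans.
  - intros [x hx] [y hy]; simpl; intros h1 h2.
    pose proof (le_antisym _ x y h1 h2) as e; subst y.
    f_equal; apply proof_irrelevance.
Defined.

Definition incl_poset (P : poset) (S : (P -> Prop) -> Prop) : poset.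
Proof.
  refine (@Poset {A : P -> Prop | S A}
            (fun A B => forall x, proj1_sig A x -> proj1_sig B x) _ _ _).
  - intros [A hA] x h; exact h.
  - intros [A hA] [B hB] [C hC]; simpl; auto.
  - intros [A hA] [B hB]; simpl; intros h1 h2.
    assert (e : A = B).
    { apply functional_extensionality; intro x;
      apply propositional_extensionality; split; auto. }
    subst B; f_equal; apply proof_irrelevance.
Defined.

Definition one_poset : poset.
Proof.
  refine (@Poset unit (fun _ _ => True) _ _ _); auto.
  intros [] [] _ _; reflexivity.
Defined.

Definition empty_poset : poset.
Proof.
  refine (@Poset Empty_set (fun _ _ => True) _ _ _); auto.
  intros [].
Defined.

Definition omega : poset.
Proof.
  refine (@Poset nat Nat.le _ _ _).
  - intros; apply Nat.le_refl.
  - intros x y z; apply Nat.le_trans.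
  - intros x y; apply Nat.le_antisymm.
Defined.

Definition unit_interval : poset.
Proof.
  refine (@Poset {r : R | 0 <= r <= 1} (fun a b => proj1_sig a <= proj1_sig b) _ _ _).
  - intros [r hr]; simpl; lra.
  - intros [x hx] [y hy] [z hz]; simpl; lra.
  - intros [x hx] [y hy]; simpl; intros h1 h2.
    assert (e : x = y) by lra. subst y; f_equal; apply proof_irrelevance.
Defined.

Definition cofinal (P : poset) (A : P -> Prop) : Prop :=
  forall x : P, exists y, A y /\ le x y.

Definition monotone (P Q : poset) (f : P -> Q) : Prop :=
  forall x y, le x y -> le (f x) (f y).

Record join_doctrine (Phi : poset -> Prop) : Prop := {
  jd_one : Phi one_poset;
  jd_union : forall (P : poset) (S : (P -> Prop) -> Prop),
      (forall x : P, exists A, S A /\ A x) ->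
      (forall A, S A -> Phi (sub P A)) ->
      Phi (incl_poset P S) -> Phi P;
  jd_image : forall (P Q : poset) (f : P -> Q),
      monotone P Q f -> (forall y : Q, exists x, le y (f x)) -> Phi P -> Phi Q;
  jd_cofinal : forall (P : poset) (A : P -> Prop),
      cofinal P A -> Phi P -> Phi (sub P A)
}.

Definition lower_set (X : poset) (A : X -> Prop) : Prop :=
  forall x y : X, A y -> le x y -> A x.

Definition PhiX (Phi : poset -> Prop) (X : poset) (A : X -> Prop) : Prop :=
  lower_set X A /\ Phi (sub X A).

Definition is_join (X : poset) (A : X -> Prop) (s : X) : Prop :=
  (forall a, A a -> le a s) /\ (forall u, (forall a, A a -> le a u) -> le s u).

Definition Phi_suplattice (Phi : poset -> Prop) (X : poset) : Prop :=
  forall A : X -> Prop, Phi (sub X A) -> exists s, is_join X A s.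

Definition way_below (Phi : poset -> Prop) (X : poset) (y x : X) : Prop :=
  forall A : X -> Prop, PhiX Phi X A ->
    forall s, is_join X A s -> le x s -> A y.

Definition Phi_compact (Phi : poset -> Prop) (X : poset) (x : X) : Prop :=
  way_below Phi X x x.

Definition Phi_continuous (Phi : poset -> Prop) (X : poset) : Prop :=
  forall x : X, exists A : X -> Prop, PhiX Phi X A /\
    (forall y, A y -> way_below Phi X y x) /\
    (exists s, is_join X A s /\ le x s).

(** The smallest subset containing the Φ-compact elements and closed under
    Φ-joins is X: every such subset is all of X. *)
Definition Phi_algebraic (Phi : poset -> Prop) (X : poset) : Prop :=
  forall C : X -> Prop,
    (forall x, Phi_compact Phi X x -> C x) ->
    (forall (A : X -> Prop) s, (forall a, A a -> C a) -> Phi (sub X A) ->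
        is_join X A s -> C s) ->
    forall x, C x.

Definition has_least (X : poset) : Prop := exists b : X, forall x, le b x.

Definition I0 : unit_interval := exist (fun r => 0 <= r <= 1) 0 ltac:(split; lra).

(* Main.v *)
Require Import Defs.
From Stdlib Require Import Reals Lra Lia Classical ClassicalEpsilon FunctionalExtensionality PropExtensionality Wf_nat.
Open Scope R_scope.

Lemma least_nat (Q : nat -> Prop) : (exists m, Q m) -> exists m, Q m /\ forall k, Q k -> (m <= k)%nat.
Proof.
  intros H. destruct (dec_inh_nat_subset_has_unique_least_element Q (fun n => classic (Q n)) H)
    as [m [[Hm Hl] _]]. exists m; split; auto.
Qed.

Section Gen.
Variable Phi : poset -> Prop.
Variable HPhi : join_doctrine Phi.

Lemma chain_le (P : poset) (x : nat -> P) : (forall n, le (x n) (x (S n))) ->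
  forall n m, (n <= m)%nat -> le (x n) (x m).
Proof.
  intros Hx n m Hnm. induction Hnm. apply le_refl. eapply le_trans; eauto.
Qed.

Lemma strict_ge (i : nat -> nat) : (forall n, (i n < i (S n))%nat) -> forall n, (n <= i n)%nat.
Proof. intros H n; induction n; [lia| specialize (H n); lia]. Qed.

Lemma part_i1 : ~ Phi omega -> forall (P : poset), Phi P -> forall x : nat -> P,
         exists i : nat -> nat, (forall n, (i n < i (S n))%nat) /\
           exists u : P, forall n, le (x (i n)) u.
Proof.
  intros Hom P HP x.
  destruct (classic (exists u : P, forall m, exists n, (m <= n)%nat /\ le (x n) u)) as [[u Hu]|Hn].
  - pose (g := fun m => proj1_sig (constructive_indefinite_description _ (Hu m))).
    assert (Hg : forall m, (m <= g m)%nat /\ le (x (g m)) u).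
    { intro m; unfold g; destruct constructive_indefinite_description; auto. }
    exists (fix i n := match n with O => g O | S k => g (S (i k)) end).
    split.
    + intro n; simpl. destruct (Hg (S ((fix i (n0 : nat) : nat := match n0 with
                                       | 0%nat => g 0%nat
                                       | S k => g (S (i k))
                                       end) n))). lia.
    + exists u; intro n; destruct n; apply Hg.
  - exfalso; apply Hom.
    assert (Hb : forall u : P, exists m, forall n, le (x n) u -> (n < m)%nat).
    { intro u. apply NNPP; intro H. apply Hn. exists u. intro m.
      apply NNPP; intro H2. apply H. exists m. intros n Hn'.
      destruct (Nat.lt_ge_cases n m); auto. exfalso; apply H2; eauto. }
    assert (Hl : forall u : P, exists m, (forall n, le (x n) u -> (n < m)%nat) /\
               forall k, (forall n, le (x n) u -> (n < k)%nat) -> (m <= k)%nat).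
    { intro u; apply least_nat; auto. }
    pose (f := fun u => proj1_sig (constructive_indefinite_description _ (Hl u))).
    assert (Hf : forall u, (forall n, le (x n) u -> (n < f u)%nat) /\
               forall k, (forall n, le (x n) u -> (n < k)%nat) -> (f u <= k)%nat).
    { intro u; unfold f; destruct constructive_indefinite_description; auto. }
    apply (jd_image _ HPhi P omega f); auto.
    + intros u v Huv. simpl. apply (proj2 (Hf u)). intros n Hn'. apply (proj1 (Hf v)).
      eapply le_trans; eauto.
    + intro k. exists (x k). simpl. pose proof (proj1 (Hf (x k)) k (le_refl _ _)). lia.
Qed.

Lemma part_i2 : ~ Phi omega -> forall (P : poset), Phi P -> forall x : nat -> P,
         (forall n, le (x n) (x (S n))) -> exists u : P, forall n, le (x n) u.
Proof.
  intros Hom P HP x Hx. destruct (part_i1 Hom P HP x) as [i [Hi [u Hu]]].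
  exists u; intro n. eapply le_trans; [|apply Hu]. apply chain_le; auto. apply strict_ge; auto.
Qed.

End Gen.

Section Gen2.
Variable Phi : poset -> Prop.
Variable HPhi : join_doctrine Phi.

Lemma part_a (X : poset) (bot : X) : Phi_suplattice Phi X -> (forall x, le bot x) ->
      (Phi_compact Phi X bot <-> ~ Phi empty_poset).
Proof.
  intros HS Hb. split.
  - intros Hc He.
    assert (H0 : Phi (sub X (fun _ => False))).
    { apply (jd_image _ HPhi empty_poset _ (fun e : Empty_set => match e with end)).
      - intros [].
      - intros [y []]. - exact He. }
    destruct (HS _ H0) as [s Hs].
    exact (Hc (fun _ => False) (conj (fun _ _ h _ => h) H0) s Hs (Hb s)).
  - intros Hne A [Hlow HA] s Hs _.
    destruct (classic (exists a, A a)) as [[a Ha]|Hn].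
    + exact (Hlow bot a Ha (Hb a)).
    + exfalso; apply Hne.
      apply (jd_image _ HPhi (sub X A) empty_poset
               (fun p => False_rect _ (Hn (ex_intro _ (proj1_sig p) (proj2_sig p))))).
      * intros p; exfalso; apply Hn; exists (proj1_sig p); exact (proj2_sig p).
      * intros [].
      * exact HA.
Qed.

Lemma down_phi (X : poset) (x : X) : Phi (sub X (fun z => le z x)).
Proof.
  apply (jd_image _ HPhi one_poset (sub X (fun z => le z x)) (fun _ => exist (fun z => le z x) x (le_refl _ x))).
  - intros a b _; simpl; apply le_refl.
  - intros [y hy]; exists tt; simpl; exact hy.
  - apply jd_one; auto.
Qed.

Lemma down_join (X : poset) (x : X) : is_join X (fun z => le z x) x.
Proof. split; auto. intros u Hu; apply Hu, le_refl. Qed.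

Lemma wb_le (X : poset) (y x : X) : way_below Phi X y x -> le y x.
Proof.
  intro H. apply (H (fun z => le z x)) with (s := x).
  - split. intros a b Hb Hab; eapply le_trans; eauto. apply down_phi.
  - apply down_join.
  - apply le_refl.
Qed.

Lemma wb_mono (X : poset) (y x x' : X) : way_below Phi X y x -> le x x' -> way_below Phi X y x'.
Proof. intros H Hx A HA s Hs Hle. apply (H A HA s Hs). eapply le_trans; eauto. Qed.

Lemma wb_left (X : poset) (y' y x : X) : le y' y -> way_below Phi X y x -> way_below Phi X y' x.
Proof. intros H1 H A HA s Hs Hle. pose proof (H A HA s Hs Hle). destruct HA as [Hl _]. eapply Hl; eauto. Qed.

Lemma join_unique (X : poset) A s t : is_join X A s -> is_join X A t -> s = t.
Proof. intros [H1 H2] [H3 H4]. apply le_antisym; auto. Qed.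

Lemma cont_wb (X : poset) : Phi_continuous Phi X -> forall x,
   PhiX Phi X (fun y => way_below Phi X y x) /\ is_join X (fun y => way_below Phi X y x) x.
Proof.
  intros Hc x. destruct (Hc x) as [A [HA [Hsub [s [Hs Hxs]]]]].
  assert (E : A = (fun y => way_below Phi X y x)).
  { apply functional_extensionality; intro y; apply propositional_extensionality; split.
    - apply Hsub. - intro Hy; exact (Hy A HA s Hs Hxs). }
  subst A. split; auto.
  assert (s = x). { apply le_antisym; auto. apply Hs. intros a Ha; apply wb_le; auto. }
  subst s; auto.
Qed.

Lemma interp (X : poset) : Phi_suplattice Phi X -> Phi_continuous Phi X ->
  forall y x, way_below Phi X y x -> exists b, way_below Phi X y b /\ way_below Phi X b x.
Proof.
  intros HS Hc y x Hyx.
  set (U := fun z => exists b, way_below Phi X b x /\ way_below Phi X z b).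
  set (P := sub X U).
  set (S := fun T : P -> Prop => exists b, way_below Phi X b x /\
             T = (fun p => way_below Phi X (proj1_sig p) b)).
  assert (HU : Phi P).
  { apply (jd_union _ HPhi P S).
    - intros [z [b [hb hz]]]. exists (fun p => way_below Phi X (proj1_sig p) b).
      split; [exists b; auto | exact hz].
    - intros T [b [hb ->]].
      apply (jd_image _ HPhi (sub X (fun z => way_below Phi X z b)) (sub P (fun p : P => way_below Phi X (proj1_sig p) b))
        (fun q => exist (fun p : P => way_below Phi X (proj1_sig p) b) (exist U (proj1_sig q) (ex_intro _ b (conj hb (proj2_sig q)))) (proj2_sig q))).
      + intros q q' h; exact h.
      + intros [[z hz] hT]. exists (exist _ z hT). simpl. apply le_refl.
      + apply (proj1 (cont_wb X Hc b)).
    - apply (jd_image _ HPhi (sub X (fun z => way_below Phi X z x)) (incl_poset P S)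
        (fun q => exist S (fun p => way_below Phi X (proj1_sig p) (proj1_sig q))
                     (ex_intro _ (proj1_sig q) (conj (proj2_sig q) eq_refl)))).
      + intros q q' h p hp. simpl in *. eapply wb_mono; eauto.
      + intros [T [b [hb HT]]]. exists (exist _ b hb). simpl. subst T. auto.
      + apply (proj1 (cont_wb X Hc x)). }
  destruct (HS U HU) as [t Ht].
  assert (Hxt : le x t).
  { apply (proj2 (proj2 (cont_wb X Hc x))). intros b hb.
    apply (proj2 (proj2 (cont_wb X Hc b))). intros a ha. apply Ht. exists b; auto. }
  assert (HUy : U y).
  { apply (Hyx U) with (s := t); auto. split; auto.
    intros a z [b [hb hz]] haz. exists b; split; auto. eapply wb_left; eauto. }
  destruct HUy as [b [hb hy]]. exists b; auto.
Qed.

Lemma chain_compact (X : poset) : ~ Phi omega ->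
  forall x : nat -> X, (forall n, way_below Phi X (x n) (x (S n))) ->
            forall s, is_join X (fun y => exists n, y = x n) s -> Phi_compact Phi X s.
Proof.
  intros Hom x Hx s Hs A HA t Ht Hst.
  assert (HAx : forall n, A (x n)).
  { intro n. apply (Hx n A HA t Ht). eapply le_trans; [|exact Hst]. apply Hs. exists (S n); auto. }
  destruct HA as [Hlow HPA].
  destruct (part_i2 Phi HPhi Hom (sub X A) HPA (fun n => exist _ (x n) (HAx n))) as [[u hu] Hu].
  - intro n; simpl. apply wb_le; auto.
  - simpl in Hu. apply (Hlow s u hu). apply Hs. intros a [n ->]. apply Hu.
Qed.

End Gen2.

Section Gen3.
Variable Phi : poset -> Prop.
Variable HPhi : join_doctrine Phi.

Lemma algebraic (X : poset) : ~ Phi omega -> Phi_suplattice Phi X -> Phi_continuous Phi X ->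
         (forall x : nat -> X, (forall n, le (x n) (x (S n))) ->
            exists s, is_join X (fun y => exists n, y = x n) s) ->
         Phi_algebraic Phi X.
Proof.
  intros Hom HS Hc Hch C HC1 HC2 x.
  assert (Step1 : forall y, way_below Phi X y x -> exists c, Phi_compact Phi X c /\ le y c /\ le c x).
  { intros y Hy.
    assert (Hg : forall z, exists b, way_below Phi X z x -> way_below Phi X z b /\ way_below Phi X b x).
    { intro z. destruct (classic (way_below Phi X z x)) as [h|h].
      - destruct (interp Phi HPhi X HS Hc z x h) as [b hb]. exists b; auto.
      - exists z; intro; contradiction. }
    pose (g := fun z => proj1_sig (constructive_indefinite_description _ (Hg z))).
    assert (Hg' : forall z, way_below Phi X z x -> way_below Phi X z (g z) /\ way_below Phi X (g z) x).
    { intro z; unfold g; destruct constructive_indefinite_description; auto. }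
    pose (sq := fix sq n := match n with O => y | S k => g (sq k) end).
    assert (H1 : forall n, way_below Phi X (sq n) x /\ way_below Phi X (sq n) (sq (S n))).
    { induction n.
      - simpl. split; auto. apply Hg'; auto.
      - destruct IHn as [IH1 IH2]. simpl in *. destruct (Hg' _ IH1) as [_ h].
        split; auto. apply Hg'; auto. }
    destruct (Hch sq) as [s Hs].
    { intro n; apply (wb_le Phi HPhi); apply H1. }
    exists s. split; [|split].
    - apply (chain_compact Phi HPhi X Hom sq); auto. intro n; apply H1.
    - apply Hs. exists O; reflexivity.
    - apply Hs. intros a [n ->]. apply (wb_le Phi HPhi); apply H1. }
  destruct (cont_wb Phi HPhi X Hc x) as [[Hlow HD] Hj].
  set (K := fun y => way_below Phi X y x /\ Phi_compact Phi X y).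
  assert (HK : Phi (sub X K)).
  { set (D := fun y => way_below Phi X y x) in *.
    pose proof (jd_cofinal _ HPhi (sub X D) (fun p => Phi_compact Phi X (proj1_sig p))) as HC.
    refine (jd_image _ HPhi (sub (sub X D) (fun p : sub X D => Phi_compact Phi X (proj1_sig p))) (sub X K)
        (fun p => exist K (proj1_sig (proj1_sig p)) (conj (proj2_sig (proj1_sig p)) (proj2_sig p))) _ _ (HC _ HD)).
    - intros p q h; exact h.
    - intros [z [hz1 hz2]]. exists (exist _ (exist D z hz1) hz2). simpl. apply le_refl.
    - intros [z hz]. destruct (Step1 z hz) as [c [hc1 [hc2 hc3]]].
      exists (exist D c (wb_mono Phi X c c x hc1 hc3)). simpl. split; auto. }
  assert (HjK : is_join X K x).
  { split.
    - intros a [ha _]. apply (wb_le Phi HPhi); auto.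
    - intros u Hu. apply Hj. intros a ha. destruct (Step1 a ha) as [c [hc1 [hc2 hc3]]].
      eapply le_trans; [exact hc2|]. apply Hu. split; auto. eapply wb_mono; eauto. }
  apply (HC2 K x); auto. intros a [_ ha]; auto.
Qed.

End Gen3.

Lemma I_sup (A : unit_interval -> Prop) : exists s, is_join unit_interval A s.
Proof.
  destruct (classic (exists a, A a)) as [[a Ha]|Hn].
  - set (E := fun r => exists p : unit_interval, A p /\ proj1_sig p = r).
    destruct (completeness E) as [m [Hm1 Hm2]].
    + exists 1. intros r [[q hq] [_ <-]]. simpl; lra.
    + exists (proj1_sig a); exists a; auto.
    + assert (h0 : 0 <= m <= 1).
      { split.
        - destruct a as [q hq]. assert (E q) by (exists (exist _ q hq); auto). specialize (Hm1 q H). simpl in *; lra.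
        - apply Hm2. intros r [[q hq] [_ <-]]. simpl; lra. }
      exists (exist _ m h0). split.
      * intros p Hp. simpl. apply Hm1. exists p; auto.
      * intros [u hu] Hu. simpl. apply Hm2. intros r [p [Hp <-]]. apply (Hu p Hp).
  - exists I0. split.
    + intros p Hp; exfalso; apply Hn; eauto.
    + intros [u hu] _. simpl. lra.
Qed.

Lemma I0_least : forall x : unit_interval, le I0 x.
Proof. intros [u hu]; simpl; lra. Qed.

Lemma arch (e : R) : 0 < e -> exists n : nat, / (INR n + 1) < e.
Proof.
  intros he. destruct (archimed_cor1 e he) as [N [h1 h2]]. exists N.
  assert (0 < INR N) by (apply lt_0_INR; auto).
  eapply Rle_lt_trans; [|exact h1]. apply Rinv_le_contravar; lra.
Qed.

Section Gen4.
Variable Phi : poset -> Prop.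
Variable HPhi : join_doctrine Phi.

Lemma omega_case : Phi omega ->
     forall r : unit_interval, 0 < proj1_sig r -> ~ Phi_compact Phi unit_interval r.
Proof.
  intros Hom [r hr] Hr Hc. simpl in Hr.
  set (A := fun p : unit_interval => proj1_sig p < r).
  assert (Hf : forall n : nat, 0 <= r - r / (INR n + 2) <= 1 /\ r - r / (INR n + 2) < r).
  { intro n. assert (0 <= INR n) by apply pos_INR.
    assert (r / (INR n + 2) <= r / 2).
    { unfold Rdiv. apply Rmult_le_compat_l; [lra|]. apply Rinv_le_contravar; lra. }
    assert (0 < r / (INR n + 2)) by (apply Rdiv_lt_0_compat; lra). lra. }
  enough (HAr : A (exist _ r hr)) by (unfold A in HAr; simpl in HAr; lra).
  apply (Hc A) with (s := exist _ r hr).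
  - split.
    + intros [a ha] [b hb] h1 h2. unfold A in *; simpl in *; lra.
    + apply (jd_image _ HPhi omega (sub unit_interval A)
         (fun n => exist A (exist _ (r - r / (INR n + 2)) (proj1 (Hf n))) (proj2 (Hf n)))).
      * intros n m hnm. simpl. simpl in hnm.
        assert (INR n <= INR m) by (apply le_INR; auto).
        assert (0 <= INR n) by apply pos_INR.
        assert (r / (INR m + 2) <= r / (INR n + 2)).
        { unfold Rdiv. apply Rmult_le_compat_l; [lra|]. apply Rinv_le_contravar; lra. }
        lra.
      * intros [[y hy] Hy]. unfold A in Hy; simpl in Hy.
        destruct (arch ((r - y) / r)) as [n hn].
        { apply Rdiv_lt_0_compat; lra. }
        exists n. simpl.
        assert (0 <= INR n) by apply pos_INR.
        assert (r / (INR n + 2) <= r / (INR n + 1)).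
        { unfold Rdiv. apply Rmult_le_compat_l; [lra|]. apply Rinv_le_contravar; lra. }
        assert (r / (INR n + 1) < r - y).
        { replace (r / (INR n + 1)) with (r * / (INR n + 1)) by reflexivity.
          replace (r - y) with (r * ((r - y) / r)) by (field; lra).
          apply Rmult_lt_compat_l; lra. }
        lra.
      * exact Hom.
  - split.
    + intros [a ha] Ha; unfold A in Ha; simpl in *; lra.
    + intros [u hu] Hu. simpl. destruct (Rle_or_lt r u) as [h|h]; auto.
      assert (h2 : 0 <= (Rmax u 0 + r) / 2 <= 1).
      { unfold Rmax; destruct Rle_dec; lra. }
      specialize (Hu (exist _ _ h2)). unfold A in Hu; simpl in Hu.
      assert (Rmax u 0 = u) by (apply Rmax_left; lra). rewrite H in Hu, h2.
      assert ((u + r) / 2 <= u) by (apply Hu; lra). lra.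
  - simpl; lra.
Qed.

Lemma I_compact : ~ Phi omega ->
  forall r : unit_interval, 0 < proj1_sig r -> Phi_compact Phi unit_interval r.
Proof.
  intros Hom [r hr] Hr A [Hlow HA] t Ht Hrt. simpl in Hr.
  apply NNPP; intro Hn.
  assert (Hlt : forall a, A a -> proj1_sig a < r).
  { intros [a ha] Ha. simpl. destruct (Rlt_or_le a r) as [h|h]; auto.
    exfalso; apply Hn. apply (Hlow _ (exist _ a ha)); auto. }
  assert (Hv : forall n : nat, 0 <= r - r / (INR n + 1) <= 1 /\ r - r / (INR n + 1) < r).
  { intro n. assert (0 <= INR n) by apply pos_INR.
    assert (r / (INR n + 1) <= r).
    { unfold Rdiv. rewrite <- (Rmult_1_r r) at 2. apply Rmult_le_compat_l; [lra|].
      rewrite <- Rinv_1. apply Rinv_le_contravar; lra. }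
    assert (0 < r / (INR n + 1)) by (apply Rdiv_lt_0_compat; lra). lra. }
  assert (Hex : forall n, exists a : sub unit_interval A, r - r / (INR n + 1) < proj1_sig (proj1_sig a)).
  { intro n. apply NNPP; intro H.
    assert (le t (exist _ _ (proj1 (Hv n)))).
    { apply Ht. intros [a ha] Ha. simpl. destruct (Rle_or_lt a (r - r / (INR n + 1))) as [h|h]; auto.
      exfalso; apply H. exists (exist _ (exist _ a ha) Ha). simpl; auto. }
    destruct t as [tv ht]; simpl in *. pose proof (proj2 (Hv n)). lra. }
  pose (xs := fun n => proj1_sig (constructive_indefinite_description _ (Hex n))).
  assert (Hxs : forall n, r - r / (INR n + 1) < proj1_sig (proj1_sig (xs n))).
  { intro n; unfold xs; destruct constructive_indefinite_description; auto. }
  destruct (part_i1 Phi HPhi Hom _ HA xs) as [i [Hi [u Hu]]].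
  pose proof (Hlt _ (proj2_sig u)) as Hu1.
  destruct u as [[uv hu] hAu]. simpl in Hu1.
  destruct (arch ((r - uv) / r)) as [n hn]. { apply Rdiv_lt_0_compat; lra. }
  specialize (Hu n). specialize (Hxs (i n)). revert Hu Hxs.
  destruct (xs (i n)) as [[xv hxv] hAx]. simpl. intros Hu Hxs.
  pose proof (strict_ge i Hi n) as Hin.
  assert (INR n <= INR (i n)) by (apply le_INR; auto).
  assert (0 <= INR n) by apply pos_INR.
  assert (r / (INR (i n) + 1) <= r / (INR n + 1)).
  { unfold Rdiv. apply Rmult_le_compat_l; [lra|]. apply Rinv_le_contravar; lra. }
  assert (r / (INR n + 1) < r - uv).
  { replace (r / (INR n + 1)) with (r * / (INR n + 1)) by reflexivity.
    replace (r - uv) with (r * ((r - uv) / r)) by (field; lra).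
    apply Rmult_lt_compat_l; lra. }
  lra.
Qed.

End Gen4.
Theorem proposition2p12 (Phi : poset -> Prop) (HPhi : join_doctrine Phi) :
  (* (a) *)
  ((forall (X : poset) (bot : X), Phi_suplattice Phi X ->
      (forall x, le bot x) ->
      (Phi_compact Phi X bot <-> ~ Phi empty_poset)) /\
   (Phi_compact Phi unit_interval I0 <-> ~ Phi empty_poset)) /\
  (* (b), case omega ∈ Φ *)
  (Phi omega ->
     forall r : unit_interval, 0 < proj1_sig r -> ~ Phi_compact Phi unit_interval r) /\
  (* (b), case omega ∉ Φ *)
  (~ Phi omega ->
     (* (i) *)
     ((forall (P : poset), Phi P -> forall x : nat -> P,
         exists i : nat -> nat, (forall n, (i n < i (S n))%nat) /\
           exists u : P, forall n, le (x (i n)) u) /\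
      (forall (P : poset), Phi P -> forall x : nat -> P,
         (forall n, le (x n) (x (S n))) -> exists u : P, forall n, le (x n) u)) /\
     (* (ii) *)
     ((forall X : poset, Phi_suplattice Phi X -> Phi_continuous Phi X ->
         (forall x : nat -> X, (forall n, le (x n) (x (S n))) ->
            exists s, is_join X (fun y => exists n, y = x n) s) ->
         Phi_algebraic Phi X /\
         (forall x : nat -> X, (forall n, way_below Phi X (x n) (x (S n))) ->
            forall s, is_join X (fun y => exists n, y = x n) s -> Phi_compact Phi X s)) /\
      (forall r : unit_interval, 0 < proj1_sig r -> Phi_compact Phi unit_interval r))).
Proof.
  split; [split|split].
  - intros X bot HS Hb. apply part_a; auto.
  - apply part_a; auto. intros A _; apply I_sup. apply I0_least.
  - apply omega_case; auto.
  - intro Hom. split; [split|split].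
    + apply part_i1; auto.
    + apply part_i2; auto.
    + intros X HS Hc Hch. split.
      * apply algebraic; auto.
      * apply chain_compact; auto.
    + apply I_compact; auto.
Qed.
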